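(* Let $SG=(G,\sigma)$ be a signed graph with a total order on $E(G)$. If $z\in C^i(G)$ satisfies $f_b(z)=0$, then $f_b(d(z))=0$. Consequently $d_b:C^i_b(SG)\to C^{i+1}_b(SG)$ satisfies $d_b\circ f_b=f_b\circ d$ and $d_b\circ d_b=0$.
   Context: Signed graphs: $SG=(G,\sigma)$, $G$ finite (loops, multiple edges allowed), $\sigma:E(G)\to\{\pm1\}$. Negative circuit: product of edge signs $-1$; balanced = no negative circuit. $[G:s]$, $[SG:s]$: spanning subgraph with edge set $s$. Fix a total order on $E(G)$. An enhanced state of $G$ is $S=(s,c)$, $c$ labels each component of $[G:s]$ by $1$ or $x$; $C^i(G)$ is free on enhanced states with $|s|=i$. With $m(1,1)=1$, $m(1,x)=m(x,1)=x$, $m(x,x)=0$: for $e\notin s$, $S_e=(s\cup\{e\},c_e)$ where a component containing both ends of $e$ keeps its label and if $e$ joins components $E_i,E_j$ the merged one gets $m(c(E_i),c(E_j))$ ($S_e=0$ if both are $x$). $d(S)=\sum_{e\notin s}(-1)^{n(e)}S_e$, $n(e)$ = number of edges of $s$ preceding $e$; it is known that $d\circ d=0$. $C^i_b(SG)\subseteq C^i(G)$ is spanned by enhanced states with $[SG:s]$ balanced; $f_b:C^i(G)\to C^i_b(SG)$ is the linear projection sending an enhanced state to itself if $[SG:s]$ is balanced and to $0$ otherwise; $d_b(S):=f_b(d(S))$. *)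

(* Defs.v *)
From HB Require Import structures.
From mathcomp Require Import all_boot all_order all_algebra.
Set Implicit Arguments. Unset Strict Implicit. Unset Printing Implicit Defensive.
Import Order.TTheory GRing.Theory Num.Theory.
Local Open Scope ring_scope.

(* A finite graph G: vertex set V (a finType), edge set 'I_m (edges are
   numbered 0..m-1; the fixed total order on E(G) is the order of the
   indices).  [ends e = (u,v)] gives the two end vertices of e (u = v for a
   loop); multiple edges are allowed (distinct indices may have equal ends).
   The signature is sigma : 'I_m -> int with values in {1,-1}. *)

Notation state V m := ({set 'I_m} * {ffun V -> bool})%type.
Notation chain V m := {ffun state V m -> int}.

Section SignedGraph.
Variables (V : finType) (m : nat) (ends : 'I_m -> V * V) (sigma : 'I_m -> int).

Definition joins (e : 'I_m) (a b : V) : bool :=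
  (ends e == (a, b)) || (ends e == (b, a)).

Definition adj (s : {set 'I_m}) : rel V :=
  fun a b => [exists e, (e \in s) && joins e a b].

Definition sconn (s : {set 'I_m}) (a b : V) : bool := connect (adj s) a b.

(* A circuit of [G:s] of length k >= 1: pairwise distinct edges
   es_0..es_{k-1} of s and pairwise distinct vertices vs_0..vs_{k-1} such
   that es_j joins vs_j and vs_{j+1 mod k}
   (k = 1: a loop; k = 2: two parallel edges; k >= 3: a cycle). *)
Definition is_circuit (s : {set 'I_m}) (k : nat)
    (es : k.-tuple 'I_m) (vs : k.-tuple V) : bool :=
  [&& (0 < k)%N, uniq es, uniq vs,
      all (fun e => e \in s) es &
      [forall j : 'I_k, joins (tnth es j) (tnth vs j) (tnth vs (ordS j))]].

Definition is_neg_circuit (s : {set 'I_m}) (k : nat)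
    (es : k.-tuple 'I_m) (vs : k.-tuple V) : bool :=
  is_circuit s es vs && (\prod_(e <- es) sigma e == -1).

(* [SG:s] is balanced: it has no negative circuit.  Since the vertices of a
   circuit are pairwise distinct, its length k is at most #|V|, so the
   quantification over k <= #|V| covers all circuits. *)
Definition balanced (s : {set 'I_m}) : bool :=
  ~~ [exists k : 'I_#|V|.+1, [exists es : k.-tuple 'I_m,
        [exists vs : k.-tuple V, is_neg_circuit s es vs]]].

(* Enhanced states.  A pair (s, c) with c : V -> bool constant on the
   connected components of [G:s]; c v = false encodes the label 1 and
   c v = true encodes the label x of the component of v. *)

Definition valid_state (S : state V m) : bool :=
  [forall a, forall b, sconn S.1 a b ==> (S.2 a == S.2 b)].

(* Chains: elements of the free Z-module on enhanced states, represented by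
   their coefficient functions (zero outside valid states). *)

Definition inC (i : nat) (z : chain V m) : Prop :=
  forall S, z S != 0 -> valid_state S /\ #|S.1| = i.

(* S_e, for e not in s: None encodes S_e = 0.
   If both ends of e are in the same component, labels are kept; otherwise
   the merged component gets m(c(E_i), c(E_j)) = c u || c v, and S_e = 0
   when both labels are x. *)
Definition state_e (S : state V m) (e : 'I_m) : option (state V m) :=
  let u := (ends e).1 in let v := (ends e).2 in
  let s := S.1 in let c := S.2 in
  if sconn s u v then Some (e |: s, c)
  else if c u && c v then None
  else Some (e |: s,
             [ffun w => if sconn s u w || sconn s v w then c u || c v else c w]).

Definition opt_coef (o : option (state V m)) (T : state V m) : int :=
  if o is Some T' then (T == T')%:R else 0.

Definition n_before (s : {set 'I_m}) (e : 'I_m) : nat :=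
  #|[set e' in s | (e' < e)%N]|.

Definition d_state (S : state V m) : chain V m :=
  [ffun T => \sum_(e | e \notin S.1)
                (-1) ^+ n_before S.1 e * opt_coef (state_e S e) T].

Definition d (z : chain V m) : chain V m :=
  [ffun T => \sum_(S : state V m) z S * d_state S T].

Definition f_b (z : chain V m) : chain V m :=
  [ffun S => if balanced S.1 then z S else 0].

Definition inCb (i : nat) (z : chain V m) : Prop :=
  inC i z /\ forall S, z S != 0 -> balanced S.1.

Definition d_b (z : chain V m) : chain V m := f_b (d z).

End SignedGraph.

(* Main.v *)
Require Import Defs.
From HB Require Import structures.
From mathcomp Require Import all_boot all_order all_algebra.
From mathcomp Require Import zify.
Set Implicit Arguments. Unset Strict Implicit. Unset Printing Implicit Defensive.
Import GRing.Theory Num.Theory.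
Local Open Scope ring_scope.

Lemma connect_pind (T : finType) (r : rel T) (P : pred T) a b :
  P a -> (forall x y, P x -> r x y -> P y) -> connect r a b -> P b.
Proof.
move=> Pa step /connectP[p pth ->]; elim: p a Pa pth => [|y p IH] x Px //=.
by move=> /andP[rxy pth]; apply: (IH y (step _ _ Px rxy) pth).
Qed.

Lemma adj_sym (V : finType) (m : nat) (ends : 'I_m -> V * V) s :
  symmetric (adj ends s).
Proof.
move=> a b; rewrite /adj; apply/existsP/existsP => -[e /andP[es j]];
  by exists e; rewrite es /joins orbC.
Qed.

Lemma sconn_sym (V : finType) (m : nat) (ends : 'I_m -> V * V) s a b :
  sconn ends s a b = sconn ends s b a.
Proof. exact: (sym_connect_sym (adj_sym ends s)). Qed.

Lemma sconn_trans (V : finType) (m : nat) (ends : 'I_m -> V * V) s a b c :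
  sconn ends s a b -> sconn ends s b c -> sconn ends s a c.
Proof. exact: connect_trans. Qed.

Lemma sconn_refl (V : finType) (m : nat) (ends : 'I_m -> V * V) s a :
  sconn ends s a a.
Proof. exact: connect0. Qed.

Lemma sconn_sub (V : finType) (m : nat) (ends : 'I_m -> V * V) (s t : {set 'I_m}) a b :
  s \subset t -> sconn ends s a b -> sconn ends t a b.
Proof.
move=> st; apply: connect_sub => x y /existsP[e /andP[es j]].
apply: connect1; apply/existsP; exists e; by rewrite (subsetP st _ es).
Qed.

Lemma sconnU1 (V : finType) (m : nat) (ends : 'I_m -> V * V) s e a b :
  sconn ends (e |: s) a b =
  [|| sconn ends s a b,
      sconn ends s a (ends e).1 && sconn ends s (ends e).2 b |
      sconn ends s a (ends e).2 && sconn ends s (ends e).1 b].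
Proof.
set u := (ends e).1; set v := (ends e).2.
have sub : s \subset e |: s by apply/subsetP => x xs; rewrite inE xs orbT.
have euv : sconn ends (e |: s) u v.
  apply: connect1; apply/existsP; exists e; rewrite !inE eqxx /= /joins.
  by rewrite /u /v -surjective_pairing eqxx.
apply/idP/idP.
- apply: (@connect_pind _ _ (fun b => [|| sconn ends s a b,
      sconn ends s a u && sconn ends s v b |
      sconn ends s a v && sconn ends s u b])).
    by rewrite sconn_refl.
  move=> x y Px /existsP[f /andP[]]; rewrite !inE => /orP[/eqP-> | fs] j.
  + move: j; rewrite /joins => /orP[] /eqP E.
    * have xu : x = u by rewrite /u E.
      have yv : y = v by rewrite /v E.
      subst x y; move: Px => /or3P[H|/andP[H _]|/andP[H _]];
        by rewrite ?H ?sconn_refl ?orbT.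
    * have xv : x = v by rewrite /v E.
      have yu : y = u by rewrite /u E.
      subst x y; move: Px => /or3P[H|/andP[H _]|/andP[H _]];
        by rewrite ?H ?sconn_refl ?orbT.
  + have xy : sconn ends s x y by apply: connect1; apply/existsP; exists f; rewrite fs.
    move: Px => /or3P[H|/andP[H1 H2]|/andP[H1 H2]].
    * by rewrite (sconn_trans H xy).
    * by rewrite H1 (sconn_trans H2 xy) orbT.
    * by rewrite H1 (sconn_trans H2 xy) !orbT.
- move=> /or3P[H|/andP[H1 H2]|/andP[H1 H2]].
  + exact: sconn_sub H.
  + apply: (sconn_trans (sconn_sub sub H1)); apply: (sconn_trans euv).
    exact: sconn_sub H2.
  + apply: (sconn_trans (sconn_sub sub H1)).
    rewrite sconn_sym in euv; apply: (sconn_trans euv).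
    exact: sconn_sub H2.
Qed.

Definition colr (V : finType) (m : nat) (ends : 'I_m -> V * V) (t : {set 'I_m})
  (c : {ffun V -> bool}) : {ffun V -> bool} :=
  [ffun w => [exists x, sconn ends t w x && c x]].

Definition NN (V : finType) (m : nat) (ends : 'I_m -> V * V) (s : {set 'I_m})
  (c : {ffun V -> bool}) (t : {set 'I_m}) : bool :=
  [exists x, exists y, [&& c x, c y, sconn ends t x y & ~~ sconn ends s x y]].

Lemma validP (V : finType) (m : nat) (ends : 'I_m -> V * V) s c a b :
  valid_state ends (s, c) -> sconn ends s a b -> c a = c b.
Proof. by move=> /forallP/(_ a)/forallP/(_ b)/implyP H /H/eqP. Qed.

Lemma valid_col (V : finType) (m : nat) (ends : 'I_m -> V * V) t c :
  valid_state ends (t, colr ends t c).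
Proof.
apply/forallP => a; apply/forallP => b; apply/implyP => ab /=.
rewrite /= in ab; rewrite !ffunE; apply/eqP; apply/idP/idP => /existsP[x /andP[h cx]]; apply/existsP; exists x; rewrite cx andbT.
  by rewrite sconn_sym in ab; apply: sconn_trans ab h.
by apply: sconn_trans ab h.
Qed.

Lemma col_col (V : finType) (m : nat) (ends : 'I_m -> V * V) (s t : {set 'I_m}) c :
  s \subset t -> colr ends t (colr ends s c) = colr ends t c.
Proof.
move=> st; apply/ffunP => w; rewrite !ffunE.
apply/existsP/existsP => -[x /andP[h]].
  rewrite ffunE => /existsP[y /andP[h2 cy]]; exists y; rewrite cy andbT.
  exact: sconn_trans h (sconn_sub st h2).
move=> cx; exists x; rewrite h ffunE /=; apply/existsP; exists x.
by rewrite sconn_refl cx.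
Qed.

Lemma NN_trans (V : finType) (m : nat) (ends : 'I_m -> V * V) (s t t2 : {set 'I_m}) c :
  s \subset t -> t \subset t2 ->
  NN ends s c t2 = NN ends s c t || NN ends t (colr ends t c) t2.
Proof.
move=> st tt2; apply/idP/idP.
  move=> /existsP[x /existsP[y /and4P[cx cy h nh]]].
  case: (boolP (sconn ends t x y)) => hxy.
    by apply/orP; left; apply/existsP; exists x; apply/existsP; exists y; rewrite cx cy hxy nh.
  apply/orP; right; apply/existsP; exists x; apply/existsP; exists y.
  rewrite h hxy !ffunE /= andbT; apply/andP; split; apply/existsP.
    by exists x; rewrite sconn_refl.
  by exists y; rewrite sconn_refl.
move=> /orP[] /existsP[x /existsP[y /and4P[cx cy h nh]]].
  apply/existsP; exists x; apply/existsP; exists y; rewrite cx cy nh (sconn_sub tt2 h).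
  by [].
move: cx cy; rewrite !ffunE => /existsP[x' /andP[hx cx']] /existsP[y' /andP[hy cy']].
apply/existsP; exists x'; apply/existsP; exists y'; rewrite cx' cy' /=.
apply/andP; split.
  rewrite sconn_sym in hx; apply: sconn_trans (sconn_sub tt2 hx) _.
  exact: sconn_trans h (sconn_sub tt2 hy).
apply: contra nh => h'; rewrite sconn_sym in hy.
exact: sconn_trans hx (sconn_trans (sconn_sub st h') hy).
Qed.

Lemma state_eE (V : finType) (m : nat) (ends : 'I_m -> V * V) s c e :
  valid_state ends (s, c) ->
  state_e ends (s, c) e =
  if NN ends s c (e |: s) then None else Some (e |: s, colr ends (e |: s) c).
Proof.
move=> vS; rewrite /state_e /=.
set u := (ends e).1; set v := (ends e).2.
have colE : forall w, colr ends (e |: s) c w =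
    [|| c w, sconn ends s w u && c v | sconn ends s w v && c u].
  move=> w; rewrite ffunE; apply/existsP/idP.
    move=> [x /andP[]]; rewrite sconnU1 -/u -/v => /or3P[H|/andP[H1 H2]|/andP[H1 H2]] cx.
    - by rewrite (validP vS H) cx.
    - by rewrite H1 (validP vS H2) cx orbT.
    - by rewrite H1 (validP vS H2) cx !orbT.
  move=> /or3P[H|/andP[H1 H2]|/andP[H1 H2]].
  - by exists w; rewrite sconn_refl.
  - by exists v; rewrite sconnU1 -/u -/v H1 sconn_refl H2 orbT.
  - by exists u; rewrite sconnU1 -/u -/v H1 sconn_refl H2 !orbT.
case: (boolP (sconn ends s u v)) => Huv.
  have -> : NN ends s c (e |: s) = false.
    apply/negbTE/negP => /existsP[x /existsP[y /and4P[_ _ h nh]]].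
    move: h; rewrite sconnU1 -/u -/v => /or3P[H|/andP[H1 H2]|/andP[H1 H2]].
    - by rewrite H in nh.
    - by rewrite (sconn_trans H1 (sconn_trans Huv H2)) in nh.
    - rewrite sconn_sym in Huv.
      by rewrite (sconn_trans H1 (sconn_trans Huv H2)) in nh.
  congr (Some (_, _)); apply/ffunP => w; rewrite colE.
  case: (boolP (sconn ends s w u)) => wu /=.
    by rewrite -(validP vS wu) -(validP vS Huv) (validP vS wu); case: (c u); rewrite ?andbF ?orbT.
  case: (boolP (sconn ends s w v)) => wv /=; last by rewrite orbF.
  by rewrite (validP vS wv) -(validP vS Huv) orbb.
case: (boolP (c u && c v)) => cuv.
  have -> // : NN ends s c (e |: s).
  apply/existsP; exists u; apply/existsP; exists v; move/andP: cuv => [-> ->].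
  by rewrite Huv sconnU1 -/u -/v !sconn_refl orbT.
have -> : NN ends s c (e |: s) = false.
  apply/negbTE/negP => /existsP[x /existsP[y /and4P[cx cy h nh]]].
  move: h; rewrite sconnU1 -/u -/v => /or3P[H|/andP[H1 H2]|/andP[H1 H2]].
  - by rewrite H in nh.
  - by move: cuv; rewrite -(validP vS H1) (validP vS H2) cx cy.
  - by move: cuv; rewrite -(validP vS H1) (validP vS H2) cx cy.
congr (Some (_, _)); apply/ffunP => w; rewrite colE ffunE.
rewrite (sconn_sym _ _ u w) (sconn_sym _ _ v w).
case: (boolP (sconn ends s w u)) => wu /=.
  by rewrite (validP vS wu); case: (c u); case: (c v); rewrite ?andbF ?andbT ?orbT ?orbF.
case: (boolP (sconn ends s w v)) => wv /=; last by rewrite orbF.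
by rewrite (validP vS wv); case: (c u); case: (c v).
Qed.

Lemma n_beforeU1 (m : nat) (s : {set 'I_m}) e e' : e \notin s ->
  n_before (e |: s) e' = (n_before s e' + (e < e')%N)%N.
Proof.
move=> es; rewrite /n_before.
have -> : [set x in e |: s | (x < e')%N] =
   if (e < e')%N then e |: [set x in s | (x < e')%N] else [set x in s | (x < e')%N].
  apply/setP => x; case: ifP => h; rewrite !inE.
    by case: (eqVneq x e) => [->|] //=; rewrite h.
  by case: (eqVneq x e) => [->|] //=; rewrite h andbF.
case: ifP => h; last by rewrite addn0.
by rewrite cardsU1 inE (negbTE es) /= addnC.
Qed.

Lemma opt_sum (V : finType) (m : nat) (o : option (state V m)) (F : state V m -> int) :
  \sum_(S : state V m) opt_coef o S * F S = if o is Some x then F x else 0.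
Proof.
case: o => [x|]; last by rewrite big1 // => S _; rewrite mul0r.
rewrite (bigD1 x) //= eqxx mul1r big1 ?addr0 // => S /negbTE h.
by rewrite h mul0r.
Qed.

Lemma d_stateE (V : finType) (m : nat) (ends : 'I_m -> V * V) S T :
  d_state ends S T = \sum_(e | e \notin S.1)
     (-1) ^+ n_before S.1 e * opt_coef (state_e ends S e) T.
Proof. by rewrite ffunE. Qed.

Lemma dE (V : finType) (m : nat) (ends : 'I_m -> V * V) z T :
  d ends z T = \sum_(S : state V m) z S * d_state ends S T.
Proof. by rewrite ffunE. Qed.

Lemma sum_antisym (m : nat) (A : 'I_m -> 'I_m -> int) :
  (forall e e', A e e' = - A e' e) -> \sum_e \sum_e' A e e' = 0.
Proof.
move=> H.
have : \sum_e \sum_e' A e e' = - \sum_e \sum_e' A e e'.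
  rewrite [LHS]exchange_big -sumrN; apply: eq_bigr => e _.
  rewrite -sumrN; apply: eq_bigr => e' _; exact: H.
move=> h; lia.
Qed.

Lemma ddS (V : finType) (m : nat) (ends : 'I_m -> V * V) S T :
  valid_state ends S ->
  \sum_(S' : state V m) d_state ends S S' * d_state ends S' T = 0.
Proof.
case: S => s c vS.
pose G (t : {set 'I_m}) : int :=
  if NN ends s c t then 0 else (T == (t, colr ends t c))%:R.
pose A e e' : int := if [&& e \notin s, e' \notin s & e != e'] then
   (-1) ^+ (n_before s e + n_before (e |: s) e') * G (e' |: (e |: s)) else 0.
have sub1 : forall e (t : {set 'I_m}), t \subset e |: t.
  by move=> e t; apply/subsetP => x xs; rewrite inE xs orbT.
transitivity (\sum_e \sum_e' A e e'); last first.
  apply: sum_antisym => e e'; rewrite /A.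
  case: (boolP (e \notin s)) => es /=; last by rewrite andbF oppr0.
  case: (boolP (e' \notin s)) => e's /=; last by rewrite oppr0.
  rewrite eq_sym; case: (eqVneq e' e) => ee /=; first by rewrite oppr0.
  rewrite setUCA !n_beforeU1 //.
  have lt : (e < e')%N = ~~ (e' < e)%N.
    case: (ltngtP e e') => // /val_inj h.
    by move: ee; rewrite h eqxx.
  rewrite lt; case: (e' < e)%N => /=; rewrite ?addn0 ?addn1;
  by rewrite ?addnS ?exprS [(n_before s e' + _)%N]addnC ?mulN1r ?mulNr ?opprK.
under eq_bigr => S' _ do rewrite d_stateE /= big_distrl /=.
rewrite exchange_big /=.
rewrite [RHS](bigID (fun e => e \notin s)) /= [X in _ = _ + X]big1; last first.
  by move=> e /negPn es; apply: big1 => e' _; rewrite /A es.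
rewrite addr0; apply: eq_bigr => e es.
under eq_bigr => S' _ do rewrite -mulrA.
rewrite -big_distrr /= opt_sum state_eE //.
case: ifP => Ne.
  rewrite mulr0; apply/esym/big1 => e' _; rewrite /A /G.
  rewrite (@NN_trans _ _ ends _ _ _ c (sub1 e s) (sub1 e' _)) Ne /=.
  by case: ifP; rewrite ?mulr0.
rewrite d_stateE /= big_distrr /=.
rewrite [RHS](bigID (fun e' => e' \notin e |: s)) /= [X in _ = _ + X]big1; last first.
  move=> e' /negPn; rewrite !inE => /orP[/eqP->|e's]; rewrite /A ?eqxx ?e's ?andbF //.
rewrite addr0; apply: eq_bigr => e'; rewrite !inE negb_or => /andP[ne e's].
rewrite state_eE; last exact: valid_col.
rewrite /A es e's eq_sym ne /= exprD -mulrA; congr (_ * _); congr (_ * _).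
rewrite /G (@NN_trans _ _ ends _ _ _ c (sub1 e s) (sub1 e' _)) Ne /=.
by case: ifP => //; rewrite col_col ?sub1.
Qed.

Lemma d_state_support (V : finType) (m : nat) (ends : 'I_m -> V * V) S T :
  d_state ends S T != 0 -> exists2 e, e \notin S.1 & state_e ends S e = Some T.
Proof.
case: (pickP [pred e | (e \notin S.1) && (state_e ends S e == Some T)]) => [e /andP[h /eqP h2] _|H].
  by exists e.
rewrite d_stateE big1 ?eqxx // => e es.
have := H e; rewrite /= es /=; case: (state_e ends S e) => [T'|] //=; last by rewrite mulr0.
move=> /negbT h; suff -> : (T == T') = false by rewrite mulr0.
by apply/negbTE; apply: contra h => /eqP ->.
Qed.

Lemma state_e_fst (V : finType) (m : nat) (ends : 'I_m -> V * V) S e T :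
  state_e ends S e = Some T -> T.1 = e |: S.1.
Proof. by rewrite /state_e; case: ifP => _; [|case: ifP => _] => // -[<-]. Qed.

Lemma balanced_sub (V : finType) (m : nat) (ends : 'I_m -> V * V) sigma
  (s t : {set 'I_m}) : s \subset t -> balanced ends sigma t -> balanced ends sigma s.
Proof.
move=> st; apply: contra => /existsP[k /existsP[es /existsP[vs H]]].
apply/existsP; exists k; apply/existsP; exists es; apply/existsP; exists vs.
move: H; rewrite /is_neg_circuit /is_circuit => /andP[/and5P[h1 h2 h3 h4 h5] h6].
apply/andP; split=> //; apply/and5P; split=> //.
apply/allP => x /(allP h4); exact: (subsetP st).
Qed.

Lemma fb_app (V : finType) (m : nat) (ends : 'I_m -> V * V) sigma z T :
  f_b ends sigma z T = if balanced ends sigma T.1 then z T else 0.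
Proof. by rewrite ffunE. Qed.

Lemma d_fb (V : finType) (m : nat) (ends : 'I_m -> V * V) sigma z T :
  balanced ends sigma T.1 -> d ends z T = d ends (f_b ends sigma z) T.
Proof.
move=> bT; rewrite !dE; apply: eq_bigr => S _; rewrite fb_app.
case: ifP => // bS; case: (eqVneq (d_state ends S T) 0) => [->|h]; first by rewrite !mulr0.
case: (d_state_support h) => e _ /state_e_fst h1.
have : balanced ends sigma S.1.
  apply: (balanced_sub _ bT); rewrite h1; apply/subsetP => x xs; rewrite inE xs orbT.
  by []. by rewrite bS.
Qed.

Lemma fb_d_fb (V : finType) (m : nat) (ends : 'I_m -> V * V) sigma z :
  d_b ends sigma (f_b ends sigma z) = f_b ends sigma (d ends z).
Proof.
apply/ffunP => T; rewrite /d_b !fb_app; case: ifP => // bT.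
by rewrite -d_fb.
Qed.

Lemma dd0 (V : finType) (m : nat) (ends : 'I_m -> V * V) i z :
  inC ends i z -> d ends (d ends z) = 0.
Proof.
move=> Hz; apply/ffunP => T; rewrite dE ffunE.
under eq_bigr => S' _ do rewrite dE big_distrl /=.
rewrite exchange_big /=; apply: big1 => S _.
under eq_bigr => S' _ do rewrite -mulrA.
rewrite -big_distrr /=; case: (eqVneq (z S) 0) => [->|h]; first by rewrite mul0r.
by rewrite ddS ?mulr0 //; case: (Hz S h).
Qed.

Lemma sum_neq0 (I : finType) (F : I -> int) :
  \sum_i F i != 0 -> exists i, F i != 0.
Proof.
case: (pickP [pred i | F i != 0]) => [i h _|H]; first by exists i.
by rewrite big1 ?eqxx // => i _; have := H i => /= /negbFE/eqP.
Qed.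

Unset Implicit Arguments.
Theorem mainTheorem9 (V : finType) (m : nat) (ends : 'I_m -> V * V)
    (sigma : 'I_m -> int) (Hsigma : forall e, sigma e = 1 \/ sigma e = -1) :
  (forall (i : nat) (z : chain V m),
      inC ends i z -> f_b ends sigma z = 0 -> f_b ends sigma (d ends z) = 0) /\
  (forall (i : nat) (z : chain V m),
      inCb ends sigma i z -> inCb ends sigma i.+1 (d_b ends sigma z)) /\
  (forall (i : nat) (z : chain V m),
      inC ends i z -> d_b ends sigma (f_b ends sigma z) = f_b ends sigma (d ends z)) /\
  (forall (i : nat) (z : chain V m),
      inCb ends sigma i z -> d_b ends sigma (d_b ends sigma z) = 0).
Proof.
split.
  move=> i z _ hz; apply/ffunP => T; rewrite fb_app [RHS]ffunE; case: ifP => // bT.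
  rewrite (d_fb _ bT) hz dE; apply: big1 => S _; by rewrite ffunE mul0r.
split.
  move=> i z [Hz Hb]; split; last first.
    by move=> T; rewrite /d_b fb_app; case: ifP => //; rewrite eqxx.
  move=> T; rewrite /d_b fb_app; case: ifP => bT; last by rewrite eqxx.
  rewrite dE => /sum_neq0[S]; rewrite mulf_eq0 negb_or => /andP[hzS hd].
  case: (Hz S hzS) => vS cS.
  case: (d_state_support hd) => e es he.
  move: vS he; case: S es cS hzS hd => s c /= es cS _ _ vS.
  rewrite state_eE //; case: ifP => // _ [<-]; split; first exact: valid_col.
  by rewrite /= cardsU1 es cS.
split.
  by move=> i z _; apply: fb_d_fb.
move=> i z [Hz _]; rewrite {2}/d_b fb_d_fb (dd0 Hz).
by apply/ffunP => T; rewrite fb_app ffunE; case: ifP.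
Qed.
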